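(* Let $T$ be a CPTP map on $\mathfrak{H}(\mathcal{H})$ with a fixed operator-sum representation $\{M_k\}$, and let $\mathcal{H}_S\neq\mathcal{H}$ be an invariant subspace. Then $\mathcal{H}_S$ is GAS if and only if the Dissipation-Induced Decomposition (DID) construction started from $\mathcal{H}_S$ terminates successfully.
   Context: $\mathcal{H}$ is a finite-dimensional complex Hilbert space, $\mathfrak{H}(\mathcal{H})$ the real space of Hermitian operators, $\mathfrak{D}(\mathcal{H})$ the density operators. $T$ is CPTP: $T(\rho)=\sum_k M_k\rho M_k^\dagger$, $\sum_kM_k^\dagger M_k=I$. A subspace $\mathcal{H}_S$ (projection $\Pi_S$) is invariant if $\rho\ge0$, $\mathrm{supp}(\rho)\subseteq\mathcal{H}_S$ implies $\mathrm{supp}(T(\rho))\subseteq\mathcal{H}_S$, with $\mathrm{supp}(X)=(\ker X)^\perp$. An invariant $\mathcal{H}_S$ is GAS if $\lim_{n\to\infty}\|T^n(\rho)-\Pi_ST^n(\rho)\Pi_S\|=0$ for all $\rho\in\mathfrak{D}(\mathcal{H})$. DID construction: set $\mathcal{H}_{S_1}=\mathcal{H}_S$, $\mathcal{H}_{R_1}=\mathcal{H}_S^\perp$. At step $i$, with $\mathcal{H}=\mathcal{H}_{S_i}\oplus\mathcal{H}_{R_i}$ orthogonal, let $M_{k,P'_i}=\Pi_{S_i}M_k|_{\mathcal{H}_{R_i}}:\mathcal{H}_{R_i}\to\mathcal{H}_{S_i}$ and $\mathcal{H}_{R_{i+1}}=\bigcap_k\ker(M_{k,P'_i})\subseteq\mathcal{H}_{R_i}$.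 (1) If $\mathcal{H}_{R_{i+1}}=\mathcal{H}_{R_i}$ (all $M_{k,P'_i}=0$), set $\mathcal{H}_{T_i}=\mathcal{H}_{R_i}$ and stop: the construction terminates unsuccessfully. (2) If $\mathcal{H}_{R_{i+1}}=\{0\}$, set $\mathcal{H}_{T_i}=\mathcal{H}_{R_i}$ and stop: the construction terminates successfully. (3) Otherwise let $\mathcal{H}_{T_i}$ be the orthogonal complement of $\mathcal{H}_{R_{i+1}}$ in $\mathcal{H}_{R_i}$, set $\mathcal{H}_{S_{i+1}}=\mathcal{H}_{S_i}\oplus\mathcal{H}_{T_i}$, and iterate. *)

(* Defs.v *)
From HB Require Import structures.
From mathcomp Require Import all_boot all_order all_algebra.
Set Implicit Arguments. Unset Strict Implicit. Unset Printing Implicit Defensive.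
Import Order.TTheory GRing.Theory Num.Theory.
Local Open Scope ring_scope.

(* A SUBSPACE of H is represented (mxalgebra
   style) by a matrix U whose row space is { v^T | v in the subspace }. *)

Section QDefs.
Variable C : numClosedFieldType.
Variable n : nat.

Definition adj (p q : nat) (A : 'M[C]_(p, q)) : 'M[C]_(q, p) := map_mx Num.conj (A^T).

Definition orth (p : nat) (U : 'M[C]_(p, n)) : 'M[C]_n := kermx (adj U).

(* kernel and support of an operator: ker X = {v | X v = 0},
   supp X = (ker X)^perp *)
Definition kerop (X : 'M[C]_n) : 'M[C]_n := kermx (X^T).
Definition supp (X : 'M[C]_n) : 'M[C]_n := orth (kerop X).

(* range of an operator (column space), as a subspace *)
Definition rangeop (X : 'M[C]_n) : 'M[C]_n := X^T.

Definition psd (X : 'M[C]_n) : Prop :=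
  adj X = X /\ forall v : 'cV[C]_n, 0 <= (adj v *m X *m v) 0 0.
Definition density (X : 'M[C]_n) : Prop := psd X /\ \tr X = 1.
Definition orth_proj (P : 'M[C]_n) : Prop := adj P = P /\ P *m P = P.

Definition trace_preserving (m : nat) (M : 'I_m -> 'M[C]_n) : Prop :=
  \sum_(k < m) adj (M k) *m M k = 1%:M.
Definition kraus (m : nat) (M : 'I_m -> 'M[C]_n) (rho : 'M[C]_n) : 'M[C]_n :=
  \sum_(k < m) M k *m rho *m adj (M k).

Definition invariant_subspace (m : nat) (M : 'I_m -> 'M[C]_n) (P : 'M[C]_n) : Prop :=
  forall rho, psd rho -> (supp rho <= rangeop P)%MS ->
    (supp (kraus M rho) <= rangeop P)%MS.

(* GAS: || T^t(rho) - P T^t(rho) P || -> 0 for every density rho; the norm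
   is the entrywise max-norm (all norms are equivalent in finite dimension) *)
Definition GAS (m : nat) (M : 'I_m -> 'M[C]_n) (P : 'M[C]_n) : Prop :=
  forall rho, density rho ->
    forall eps : C, 0 < eps -> exists N : nat, forall t : nat, (N <= t)%N ->
      forall i j : 'I_n,
        `| (iter t (kraus M) rho - P *m iter t (kraus M) rho *m P) i j | < eps.

Definition DID_R (S : 'M[C]_n) : 'M[C]_n := orth S.
(* R_{i+1} = intersection over k of ker(Pi_{S_i} M_k |_{R_i})
           = { v in R_i | forall k, M_k v in S_i^perp } *)
Definition DID_Rnext (m : nat) (M : 'I_m -> 'M[C]_n) (S : 'M[C]_n) : 'M[C]_n :=
  (DID_R S :&: \bigcap_(k < m) kermx ((M k)^T *m adj S))%MS.
Definition DID_T (m : nat) (M : 'I_m -> 'M[C]_n) (S : 'M[C]_n) : 'M[C]_n :=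
  (DID_R S :&: orth (DID_Rnext M S))%MS.
Definition DID_step (m : nat) (M : 'I_m -> 'M[C]_n) (S : 'M[C]_n) : 'M[C]_n :=
  (S + DID_T M S)%MS.
(* S_{i+1} (0-indexed: DID_S M S0 0 = S_1 = S0) *)
Definition DID_S (m : nat) (M : 'I_m -> 'M[C]_n) (S0 : 'M[C]_n) (i : nat) :=
  iter i (DID_step M) S0.

Definition DID_fail (m : nat) (M : 'I_m -> 'M[C]_n) (S : 'M[C]_n) : bool :=
  (DID_Rnext M S == DID_R S)%MS.
Definition DID_succ (m : nat) (M : 'I_m -> 'M[C]_n) (S : 'M[C]_n) : bool :=
  ~~ DID_fail M S && (\rank (DID_Rnext M S) == 0)%N.
Definition DID_cont (m : nat) (M : 'I_m -> 'M[C]_n) (S : 'M[C]_n) : bool :=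
  ~~ DID_fail M S && (\rank (DID_Rnext M S) != 0)%N.

Definition DID_terminates_successfully (m : nat) (M : 'I_m -> 'M[C]_n)
    (S0 : 'M[C]_n) : Prop :=
  exists i : nat, (forall j, (j < i)%N -> DID_cont M (DID_S M S0 j)) /\
                  DID_succ M (DID_S M S0 i).

End QDefs.

(* Main.v *)
Require Import Defs.
From HB Require Import structures.
From mathcomp Require Import all_boot all_order all_algebra.
From mathcomp Require Import ring.
From Stdlib Require Import Classical.
Import Order.TTheory GRing.Theory Num.Theory.
Local Open Scope ring_scope.
Set Implicit Arguments. Unset Strict Implicit. Unset Printing Implicit Defensive.

Section Basic.
Variable C : numClosedFieldType.

Lemma adjM p q r (A : 'M[C]_(p, q)) (B : 'M[C]_(q, r)) : adj (A *m B) = adj B *m adj A.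
Proof. by rewrite /adj trmx_mul map_mxM. Qed.
Lemma adjK p q (A : 'M[C]_(p, q)) : adj (adj A) = A.
Proof. by apply/matrixP=> i j; rewrite !mxE conjCK. Qed.
Lemma adjD p q (A B : 'M[C]_(p, q)) : adj (A + B) = adj A + adj B.
Proof. by apply/matrixP=> i j; rewrite !mxE rmorphD. Qed.
Lemma adjN p q (A : 'M[C]_(p, q)) : adj (- A) = - adj A.
Proof. by apply/matrixP=> i j; rewrite !mxE rmorphN. Qed.
Lemma adjB p q (A B : 'M[C]_(p, q)) : adj (A - B) = adj A - adj B.
Proof. by rewrite adjD adjN. Qed.
Lemma adj0 p q : adj (0 : 'M[C]_(p, q)) = 0.
Proof. by apply/matrixP=> i j; rewrite !mxE rmorph0. Qed.
Lemma adjZ p q a (A : 'M[C]_(p, q)) : adj (a *: A) = a^* *: adj A.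
Proof. by apply/matrixP=> i j; rewrite !mxE rmorphM. Qed.
Lemma adj1 p : adj (1%:M : 'M[C]_p) = 1%:M.
Proof. by rewrite /adj trmx1 map_mx1. Qed.
Lemma adj_sum p q I (r : seq I) (P : pred I) (F : I -> 'M[C]_(p, q)) :
  adj (\sum_(i <- r | P i) F i) = \sum_(i <- r | P i) adj (F i).
Proof. by elim/big_rec2: _ => [|i x y _ <-]; rewrite ?adj0 ?adjD. Qed.
Lemma adj_entry p q (A : 'M[C]_(p, q)) i j : adj A j i = (A i j)^*.
Proof. by rewrite !mxE. Qed.
Lemma tr_adj p (A : 'M[C]_p) : \tr (adj A) = (\tr A)^*.
Proof. by rewrite /mxtrace rmorph_sum; apply: eq_bigr => i _; rewrite !mxE. Qed.

Lemma orthE n p (U : 'M[C]_(p, n)) : orth U = orthomx Num.conj (mx_of_hermitian (hermitian1mx n)) U.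
Proof. by rewrite /orth /orthomx /= mul1mx. Qed.
Lemma orthK n p (U : 'M[C]_(p, n)) : (orth (orth U) :=: U)%MS.
Proof. rewrite !orthE. exact: ortho_id. Qed.
Lemma rank_orth n p (U : 'M[C]_(p, n)) : \rank (orth U) = (n - \rank U)%N.
Proof. rewrite orthE. exact: rank_ortho. Qed.
Lemma sub_orth n p q (U : 'M[C]_(p, n)) (V : 'M[C]_(q, n)) : (V <= orth U)%MS = (V *m adj U == 0).
Proof. by apply/sub_kermxP/eqP. Qed.
Lemma orthS n p q (U : 'M[C]_(p, n)) (V : 'M[C]_(q, n)) : (orth U <= orth V)%MS = (V <= U)%MS.
Proof. rewrite !orthE. exact: submx_ortho. Qed.



Lemma orth_sym n p q (U : 'M[C]_(p, n)) (V : 'M[C]_(q, n)) : (V <= orth U)%MS = (U <= orth V)%MS.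
Proof.
rewrite !sub_orth; apply/eqP/eqP => H.
  by rewrite -[U](adjK U) -adjM H adj0.
by rewrite -[V](adjK V) -adjM H adj0.
Qed.
Lemma orth_eq n p q (U : 'M[C]_(p, n)) (V : 'M[C]_(q, n)) : (U :=: V)%MS -> (orth U :=: orth V)%MS.
Proof. move=> e; apply/eqmxP/andP; rewrite !orthS; split; by rewrite e. Qed.
Lemma orth_adds n p q (U : 'M[C]_(p, n)) (V : 'M[C]_(q, n)) :
  (orth (U + V)%MS :=: orth U :&: orth V)%MS.
Proof.
apply/eqmxP/andP; split.
  by rewrite sub_capmx !orthS addsmxSl addsmxSr.
by rewrite orth_sym addsmx_sub ![(U <= _)%MS]orth_sym ![(V <= _)%MS]orth_sym capmxSl capmxSr.
Qed.
Lemma orth_cap n p q (U : 'M[C]_(p, n)) (V : 'M[C]_(q, n)) :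
  (orth (U :&: V)%MS :=: orth U + orth V)%MS.
Proof.
have e : (orth (orth U + orth V)%MS :=: U :&: V)%MS.
  apply: eqmx_trans (orth_adds _ _) _.
  exact: cap_eqmx (orthK U) (orthK V).
apply: eqmx_trans (orth_eq (eqmx_sym e)) _.
exact: orthK.
Qed.
Lemma orth_capmx n p (U : 'M[C]_(p, n)) : (orth U :&: U = 0)%MS.
Proof. rewrite orthE capmxC. exact: orthomx_ortho_disj. Qed.

Lemma orth_step n p q (S : 'M[C]_(p, n)) (Rn : 'M[C]_(q, n)) : (Rn <= orth S)%MS ->
  (orth (S + (orth S :&: orth Rn))%MS :=: Rn)%MS.
Proof.
move=> sR.
apply: eqmx_trans (orth_adds _ _) _.
apply: eqmx_trans (cap_eqmx (eqmx_refl _) (orth_cap _ _)) _.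
apply: eqmx_trans (cap_eqmx (eqmx_refl _) (adds_eqmx (orthK S) (orthK Rn))) _.
apply: eqmx_trans (eqmx_sym (matrix_modr _ sR)) _.
rewrite orth_capmx.
exact: adds0mx.
Qed.
End Basic.

Section QF.
Variable C : numClosedFieldType.
Variable n : nat.
Implicit Types (X Y Z : 'M[C]_n) (v w : 'cV[C]_n).

Definition qf Y v : C := (adj v *m Y *m v) 0 0.
Definition nrm v : C := (adj v *m v) 0 0.

Lemma nrmE v : nrm v = \sum_i `|v i 0| ^+ 2.
Proof. by rewrite /nrm mxE; apply: eq_bigr => i _; rewrite !mxE normCKC. Qed.
Lemma nrm_ge0 v : 0 <= nrm v.
Proof. by rewrite nrmE sumr_ge0 // => i _; rewrite exprn_ge0. Qed.
Lemma nrm_eq0 v : nrm v = 0 -> v = 0.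
Proof.
rewrite nrmE => /eqP; rewrite psumr_eq0 => [/allP H|i _]; last by rewrite exprn_ge0.
apply/matrixP => i j; rewrite ord1 mxE.
by have /implyP/(_ isT) := H i (mem_index_enum _); rewrite expf_eq0 /= normr_eq0 => /eqP.
Qed.
Lemma qf1 v : qf 1%:M v = nrm v.
Proof. by rewrite /qf mulmx1. Qed.
Lemma qfD Y Z v : qf (Y + Z) v = qf Y v + qf Z v.
Proof. by rewrite /qf mulmxDr mulmxDl mxE. Qed.
Lemma qfN Y v : qf (- Y) v = - qf Y v.
Proof. by rewrite /qf mulmxN mulNmx mxE. Qed.
Lemma qfB Y Z v : qf (Y - Z) v = qf Y v - qf Z v.
Proof. by rewrite qfD qfN. Qed.
Lemma qfZ a Y v : qf (a *: Y) v = a * qf Y v.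
Proof. by rewrite /qf -scalemxAr -scalemxAl mxE. Qed.
Lemma qf0 v : qf 0 v = 0.
Proof. by rewrite /qf mulmx0 mul0mx mxE. Qed.
Lemma qf_sum I (r : seq I) (P : pred I) (F : I -> 'M[C]_n) v :
  qf (\sum_(i <- r | P i) F i) v = \sum_(i <- r | P i) qf (F i) v.
Proof. by elim/big_rec2: _ => [|i x y _ <-]; rewrite ?qf0 ?qfD. Qed.
Lemma qf_conj (A : 'M[C]_n) Y v : qf (adj A *m Y *m A) v = qf Y (A *m v).
Proof. by rewrite /qf adjM !mulmxA. Qed.

Lemma psd_conj (A : 'M[C]_n) Y : psd Y -> psd (adj A *m Y *m A).
Proof.
move=> [hY pY]; split; first by rewrite !adjM adjK hY mulmxA.
by move=> v; have := pY (A *m v); rewrite -/(qf _ _) -qf_conj.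
Qed.
Lemma psdD Y Z : psd Y -> psd Z -> psd (Y + Z).
Proof.
move=> [hY pY] [hZ pZ]; split; first by rewrite adjD hY hZ.
by move=> v; have := pY v; have := pZ v; rewrite -!/(qf _ _) qfD => a b; rewrite addr_ge0.
Qed.
Lemma psd0 : psd (0 : 'M[C]_n).
Proof. by split; [rewrite adj0 | move=> v; rewrite -/(qf _ _) qf0]. Qed.
Lemma psd_sum I (r : seq I) (P : pred I) (F : I -> 'M[C]_n) :
  (forall i, P i -> psd (F i)) -> psd (\sum_(i <- r | P i) F i).
Proof. move=> H; apply: (@big_ind _ (@psd C n)) => //; [exact: psd0 | exact: psdD]. Qed.
Lemma psdZ a Y : 0 <= a -> psd Y -> psd (a *: Y).
Proof.
move=> a0 [hY pY]; split; first by rewrite adjZ hY geC0_conj.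
by move=> v; rewrite -/(qf _ _) qfZ mulr_ge0 //; apply: pY.
Qed.
Lemma psd_qf Y v : psd Y -> 0 <= qf Y v.
Proof. by case=> _; apply. Qed.

Definition frob p q (A : 'M[C]_(p, q)) : C := \tr (A *m adj A).
Lemma frobE p q (A : 'M[C]_(p, q)) : frob A = \sum_i \sum_j `|A i j| ^+ 2.
Proof.
rewrite /frob /mxtrace; apply: eq_bigr => i _; rewrite mxE.
by apply: eq_bigr => j _; rewrite !mxE normCK.
Qed.
Lemma frob_ge0 p q (A : 'M[C]_(p, q)) : 0 <= frob A.
Proof. by rewrite frobE; do 2 (apply: sumr_ge0 => ? _); rewrite exprn_ge0. Qed.
Lemma frob_entry p q (A : 'M[C]_(p, q)) i j : `|A i j| ^+ 2 <= frob A.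
Proof.
rewrite frobE (bigD1 i) //= (bigD1 j) //= -addrA lerDl.
by rewrite addr_ge0 // sumr_ge0 // => k _; rewrite ?sumr_ge0 // => *; rewrite exprn_ge0.
Qed.
Lemma frob_eq0 p q (A : 'M[C]_(p, q)) : frob A = 0 -> A = 0.
Proof.
move=> H; apply/matrixP => i j; rewrite mxE.
have := frob_entry A i j; rewrite H => h.
have : `|A i j| ^+ 2 = 0 by apply/eqP; rewrite eq_le h exprn_ge0.
by move/eqP; rewrite expf_eq0 /= normr_eq0 => /eqP.
Qed.
End QF.
Section Sp.
Variable C : numClosedFieldType.
Variable n : nat.
Lemma herm_spec (X : 'M[C]_n) : adj X = X ->
  exists U (d : 'rV[C]_n), [/\ adj U *m U = 1%:M, U *m adj U = 1%:M & X = adj U *m diag_mx d *m U].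
Proof.
move=> hX.
have nX : X \is normalmx.
  apply/normalmxP. rewrite -/(adj X) hX. by [].
have := orthomx_spectralP nX.
have Uu := spectral_unitarymx X.
rewrite invmx_unitary // => e.
exists (spectralmx X), (spectral_diag X); split => //.
- have := mulVmx (unitarymx_unit Uu). by rewrite (invmx_unitary Uu).
- by apply/eqP: Uu.
Qed.

Lemma qf_delta (A : 'M[C]_n) i : qf A (delta_mx i 0) = A i i.
Proof.
rewrite /qf mxE (bigD1 i) //= big1 => [|j nji]; last by rewrite !mxE (negbTE nji) /= mulr0.
rewrite addr0 !mxE eqxx /= mulr1 (bigD1 i) //= big1 => [|j nji]; last first.
  by rewrite !mxE (negbTE nji) /= rmorph0 mul0r.
by rewrite adj_entry !mxE eqxx /= rmorph1 mul1r addr0.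
Qed.
Lemma qf_diag (d : 'rV[C]_n) w : qf (diag_mx d) w = \sum_i d 0 i * `|w i 0| ^+ 2.
Proof.
rewrite /qf mxE; apply: eq_bigr => i _; rewrite mxE (bigD1 i) //= big1 => [|j nji]; last first.
  by rewrite !mxE (negbTE nji) mulr0n mulr0.
by rewrite adj_entry !mxE eqxx mulr1n addr0 normCKC [RHS]mulrA [d 0 i * _]mulrC.
Qed.
Lemma tr_diagM (d : 'rV[C]_n) (Y : 'M[C]_n) : \tr (diag_mx d *m Y) = \sum_i d 0 i * Y i i.
Proof.
rewrite /mxtrace; apply: eq_bigr => i _; rewrite mxE (bigD1 i) //= big1 => [|j nji]; last first.
  by rewrite !mxE eq_sym (negbTE nji) mulr0n mul0r.
by rewrite !mxE eqxx mulr1n addr0.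
Qed.
Lemma psd_diag_ge0 (A : 'M[C]_n) i : psd A -> 0 <= A i i.
Proof. by move=> pA; rewrite -qf_delta; apply: psd_qf. Qed.

Lemma psd_spec (X : 'M[C]_n) : psd X ->
  exists U (d : 'rV[C]_n), [/\ adj U *m U = 1%:M, U *m adj U = 1%:M, X = adj U *m diag_mx d *m U
     & forall i, 0 <= d 0 i].
Proof.
move=> pX; have [U [d [h1 h2 e]]] := herm_spec (proj1 pX).
exists U, d; split => // i.
have : U *m X *m adj U = diag_mx d by rewrite e !mulmxA h2 mul1mx -mulmxA h2 mulmx1.
move=> e2; have := psd_diag_ge0 i (psd_conj (adj U) pX).
by rewrite adjK e2 mxE eqxx mulr1n.
Qed.

Lemma psd_tr_ge0 (X B : 'M[C]_n) : psd X -> psd B -> 0 <= \tr (X *m B).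
Proof.
move=> pX pB; have [U [d [h1 h2 e d0]]] := psd_spec pX.
rewrite e -!mulmxA mxtrace_mulC -mulmxA tr_diagM.
apply: sumr_ge0 => i _; apply: mulr_ge0 => //.
have := psd_diag_ge0 i (psd_conj (adj U) pB); rewrite adjK.
by [].
Qed.

Lemma psd_factor (X : 'M[C]_n) : psd X -> exists B : 'M[C]_n, X = adj B *m B.
Proof.
move=> pX; have [U [d [h1 h2 e d0]]] := psd_spec pX.
exists (diag_mx (map_mx sqrtC d) *m U).
rewrite e adjM !mulmxA; congr (_ *m _); rewrite -mulmxA; congr (_ *m _).
apply/matrixP => i j; rewrite [RHS]mxE (bigD1 i) //= big1 => [|k nki]; last first.
  by rewrite adj_entry !mxE (negbTE nki) mulr0n rmorph0 mul0r.
rewrite adj_entry !mxE addr0 eqxx mulr1n; case: (_ == _); last by rewrite !mulr0n mulr0.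
by rewrite !mulr1n geC0_conj ?sqrtC_ge0 // -expr2 sqrtCK.
Qed.

Lemma posdef_bound (A : 'M[C]_n) : adj A = A -> (forall v, v != 0 -> 0 < qf A v) ->
  exists2 delta : C, 0 < delta /\ delta <= 1 & forall v, delta * nrm v <= qf A v.
Proof.
move=> hA pA; have [U [d [h1 h2 e]]] := herm_spec hA.
have dpos i : 0 < d 0 i.
  have := pA (adj U *m delta_mx i 0).
  have -> : qf A (adj U *m delta_mx i 0) = d 0 i.
    by rewrite -(qf_conj (adj U) A (delta_mx i 0)) adjK e !mulmxA h2 mul1mx -mulmxA h2 mulmx1 qf_delta mxE eqxx mulr1n.
  apply; apply/eqP => h; have := congr1 (mulmx U) h; rewrite mulmxA h2 mul1mx mulmx0.
  by move/matrixP/(_ i 0); rewrite !mxE !eqxx /= => /eqP; rewrite oner_eq0.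
set s := \sum_i (d 0 i)^-1.
have s0 : 0 <= s by apply: sumr_ge0 => i _; rewrite invr_ge0 ltW.
have s1 : 0 < 1 + s by rewrite ltr_wpDr.
exists (1 + s)^-1.
  by split; [rewrite invr_gt0 | rewrite invf_le1 // lerDl].
move=> v; rewrite e qf_conj qf_diag.
have -> : nrm v = nrm (U *m v) by rewrite /nrm adjM !mulmxA -(mulmxA (adj v)) h1 mulmx1.
rewrite nrmE mulr_sumr; apply: ler_sum => i _; apply: ler_wpM2r; first by rewrite exprn_ge0.
rewrite -[d 0 i]invrK lef_pV2 ?posrE ?invr_gt0 //.
rewrite /s (bigD1 i) //= addrCA lerDl addr_ge0 // sumr_ge0 // => j _.
by rewrite invr_ge0 ltW.
Qed.
End Sp.

Section Quantum.
Variable C : numClosedFieldType.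
Variables n m : nat.
Variable M : 'I_m -> 'M[C]_n.
Variable P : 'M[C]_n.
Hypothesis tp : trace_preserving M.
Hypothesis op : orth_proj P.

Definition Qp := 1%:M - P.
Local Notation Q := Qp.

Lemma hP : adj P = P. Proof. by case: op. Qed.
Lemma PP : P *m P = P. Proof. by case: op. Qed.
Lemma hQ : adj Q = Q. Proof. by rewrite /Qp adjB adj1 hP. Qed.
Lemma PQ : P *m Q = 0. Proof. by rewrite /Qp mulmxBr PP mulmx1 subrr. Qed.
Lemma QP : Q *m P = 0. Proof. by rewrite /Qp mulmxBl PP mul1mx subrr. Qed.
Lemma QQ : Q *m Q = Q. Proof. by rewrite {1}/Qp mulmxBl mul1mx PQ subr0. Qed.
Lemma PQ1 : P + Q = 1%:M. Proof. by rewrite /Qp addrC subrK. Qed.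

Lemma qf_proj (A : 'M[C]_n) w : adj A = A -> A *m A = A -> qf A w = nrm (A *m w).
Proof. by move=> h1 h2; rewrite -qf1 -qf_conj h1 mulmx1 h2. Qed.
Lemma nrm_split w : nrm w = nrm (P *m w) + nrm (Q *m w).
Proof. by rewrite -qf1 -PQ1 qfD !qf_proj ?hP ?PP ?hQ ?QQ. Qed.
Lemma psd1 : psd (1%:M : 'M[C]_n).
Proof. by split; [rewrite adj1 | move=> v; rewrite -/(qf _ _) qf1 nrm_ge0]. Qed.
Lemma psd_proj (A : 'M[C]_n) : adj A = A -> A *m A = A -> psd A.
Proof. move=> h1 h2; have := psd_conj A psd1; by rewrite h1 mulmx1 h2. Qed.
Lemma psdP : psd P. Proof. exact: psd_proj hP PP. Qed.
Lemma psdQ : psd Q. Proof. exact: psd_proj hQ QQ. Qed.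

Definition Tst (Y : 'M[C]_n) := \sum_k adj (M k) *m Y *m M k.
Lemma psd_Tst Y : psd Y -> psd (Tst Y).
Proof. by move=> pY; apply: psd_sum => k _; apply: psd_conj. Qed.
Lemma TstD Y Z : Tst (Y + Z) = Tst Y + Tst Z.
Proof. by rewrite /Tst -big_split; apply: eq_bigr => k _; rewrite mulmxDr mulmxDl. Qed.
Lemma TstN Y : Tst (- Y) = - Tst Y.
Proof. by rewrite /Tst -sumrN; apply: eq_bigr => k _; rewrite mulmxN mulNmx. Qed.
Lemma TstB Y Z : Tst (Y - Z) = Tst Y - Tst Z.
Proof. by rewrite TstD TstN. Qed.
Lemma Tst1 : Tst 1%:M = 1%:M.
Proof. by rewrite /Tst -[RHS]tp; apply: eq_bigr => k _; rewrite mulmx1. Qed.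
Lemma iterTB t Y Z : iter t Tst (Y - Z) = iter t Tst Y - iter t Tst Z.
Proof. by elim: t => //= t ->; rewrite TstB. Qed.
Lemma psd_iterT t Y : psd Y -> psd (iter t Tst Y).
Proof. by elim: t => //= t IH pY; apply/psd_Tst/IH. Qed.

Lemma psd_kraus X : psd X -> psd (kraus M X).
Proof.
move=> pX; apply: psd_sum => k _.
by have := psd_conj (adj (M k)) pX; rewrite adjK.
Qed.
Lemma psd_iterK t X : psd X -> psd (iter t (kraus M) X).
Proof. by elim: t => //= t IH pX; apply/psd_kraus/IH. Qed.

Lemma tr_sum I (r : seq I) (Pr : pred I) (F : I -> 'M[C]_n) :
  \tr (\sum_(i <- r | Pr i) F i) = \sum_(i <- r | Pr i) \tr (F i).
Proof. by elim/big_rec2: _ => [|i x y _ <-]; rewrite ?mxtrace0 ?mxtraceD. Qed.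
Lemma tr_kraus X B : \tr (kraus M X *m B) = \tr (X *m Tst B).
Proof.
rewrite /kraus /Tst mulmx_suml mulmx_sumr !tr_sum; apply: eq_bigr => k _.
by rewrite -!mulmxA mxtrace_mulC !mulmxA.
Qed.
Lemma tr_iterK t X B : \tr (iter t (kraus M) X *m B) = \tr (X *m iter t Tst B).
Proof. by elim: t B => //= t IH B; rewrite tr_kraus IH -iterSr. Qed.
Lemma tr_iterK1 t X : \tr (iter t (kraus M) X) = \tr X.
Proof.
have := tr_iterK t X 1%:M; rewrite mulmx1 => ->.
suff -> : iter t Tst 1%:M = 1%:M by rewrite mulmx1.
by elim: t => //= t ->; rewrite Tst1.
Qed.

Lemma supp_herm (Y : 'M[C]_n) : adj Y = Y -> (supp Y :=: Y^T)%MS.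
Proof.
move=> hY; have e : kerop Y = orth (Y^T).
  rewrite /kerop /orth /adj trmxK; congr kermx.
  by rewrite -{1}hY /adj map_trmx trmxK.
by rewrite /supp e; apply: orthK.
Qed.
Lemma sub_rangeP_Q (Y : 'M[C]_n) : (Y^T <= P^T)%MS -> Q *m Y = 0.
Proof.
case/submxP => D e; have -> : Y = P *m D^T by rewrite -[Y]trmxK e trmx_mul trmxK.
by rewrite mulmxA QP mul0mx.
Qed.

Hypothesis inv : invariant_subspace M P.

Lemma QMP k : Q *m M k *m P = 0.
Proof.
have h1 : (supp P <= rangeop P)%MS by rewrite (supp_herm hP) /rangeop submx_refl.
have := inv psdP h1.
have hK : adj (kraus M P) = kraus M P by case: (psd_kraus psdP).
rewrite (supp_herm hK) => /sub_rangeP_Q hz.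
have e : \tr (Q *m kraus M P *m Q) = \sum_k frob (Q *m M k *m P).
  rewrite /kraus mulmx_sumr mulmx_suml tr_sum; apply: eq_bigr => j _.
  by rewrite /frob !adjM hP hQ -{1}PP !mulmxA.
have : \sum_k frob (Q *m M k *m P) = 0 by rewrite -e hz mul0mx mxtrace0.
move/eqP; rewrite psumr_eq0 => [/allP H|j _]; last exact: frob_ge0.
by apply: frob_eq0; apply/eqP; have := H k (mem_index_enum _); move/implyP; apply.
Qed.
Lemma QM k : Q *m M k = Q *m M k *m Q.
Proof. by rewrite -{1}[M k]mulmx1 -PQ1 !mulmxDr !mulmxA QMP add0r. Qed.
Lemma MadjQ k : adj (M k) *m Q = Q *m adj (M k) *m Q.
Proof. by rewrite -hQ -adjM QM !adjM hQ mulmxA. Qed.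
Lemma Tst_QQ Y : Tst (Q *m Y *m Q) = Q *m Tst (Q *m Y *m Q) *m Q.
Proof.
rewrite /Tst mulmx_sumr mulmx_suml; apply: eq_bigr => k _.
by rewrite !mulmxA MadjQ -!mulmxA QM !mulmxA.
Qed.

Definition Yt t := iter t Tst Q.
Lemma Yt_QQ t : Q *m Yt t *m Q = Yt t.
Proof.
elim: t => [|t IH] /=; first by rewrite /Yt /= !QQ.
rewrite /Yt /= -/(Yt t); have := Tst_QQ (Yt t); rewrite IH => e; exact/esym.
Qed.
Definition Dm := Q - Tst Q.
Lemma qf_QQ Y w : qf (Q *m Y *m Q) w = qf Y (Q *m w).
Proof. by rewrite -qf_conj hQ. Qed.
Lemma qf_Tst Y v : qf (Tst Y) v = \sum_k qf Y (M k *m v).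
Proof. by rewrite /Tst qf_sum; apply: eq_bigr => k _; rewrite qf_conj. Qed.
Lemma nrm_sum v : nrm v = \sum_k nrm (M k *m v).
Proof. by rewrite -qf1 -Tst1 qf_Tst; apply: eq_bigr => k _; rewrite qf1. Qed.
Lemma qf_D u : Q *m u = u -> qf Dm u = \sum_k nrm (P *m (M k *m u)).
Proof.
move=> hu; rewrite /Dm qfB qf_proj ?hQ ?QQ // hu qf_Tst nrm_sum.
have -> : \sum_k qf Q (M k *m u) = \sum_k nrm (Q *m (M k *m u)).
  by apply: eq_bigr => k _; rewrite qf_proj ?hQ ?QQ.
rewrite -sumrB; apply: eq_bigr => k _; by rewrite nrm_split addrK.
Qed.
Lemma D_QQ : Q *m Dm *m Q = Dm.
Proof.
have e1 := Yt_QQ 0; have e2 := Yt_QQ 1; rewrite /Yt /= in e1 e2.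
by rewrite /Dm (mulmxBr Q Q (Tst Q)) (mulmxBl (Q *m Q) (Q *m Tst Q) Q) e1 e2.
Qed.
Lemma psd_D : psd Dm.
Proof.
split; first by rewrite /Dm adjB hQ; case: (psd_Tst psdQ) => ->.
move=> w; rewrite -/(qf _ _) -D_QQ qf_QQ qf_D ?mulmxA ?QQ //.
by apply: sumr_ge0 => k _; apply: nrm_ge0.
Qed.
Lemma QY_step t : Q - Yt t.+1 = Dm + Tst (Q - Yt t).
Proof. rewrite /Dm /Yt /= -/(Yt t) (TstB Q (Yt t)). by rewrite addrA subrK. Qed.
Lemma psd_QY t : psd (Q - Yt t).
Proof.
elim: t => [|t IH]; first by rewrite /Yt /= subrr; apply: psd0.
by rewrite QY_step; apply: psdD; [apply: psd_D | apply: psd_Tst].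
Qed.
Lemma psd_Ydiff t : psd (Yt t - Yt t.+1).
Proof. by rewrite /Yt iterSr -iterTB; apply: psd_iterT; apply: psd_D. Qed.

Lemma sub_Rnext (S : 'M[C]_n) (v : 'cV[C]_n) : (v^T <= orth S)%MS ->
  (forall k, ((M k *m v)^T <= orth S)%MS) -> (v^T <= DID_Rnext M S)%MS.
Proof.
move=> h1 h2; rewrite /DID_Rnext /DID_R sub_capmx h1 /=.
apply/sub_bigcapmxP => k _; apply/sub_kermxP.
by rewrite mulmxA -trmx_mul; apply/eqP; rewrite -sub_orth.
Qed.
Lemma orth_DID_S S0 t : (orth (DID_S M S0 t.+1) :=: DID_Rnext M (DID_S M S0 t))%MS.
Proof. rewrite /DID_S iterS /DID_step /DID_T /DID_R; apply: orth_step; exact: capmxSl. Qed.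

Lemma adjPT : adj (P^T) = P^T.
Proof. by rewrite /adj trmxK -[map_mx _ P]trmxK map_trmx -/(adj P) hP. Qed.

Lemma K_lemma t (v : 'cV[C]_n) : Q *m v = v -> qf (Q - Yt t) v = 0 ->
  (v^T <= orth (DID_S M (rangeop P) t))%MS.
Proof.
elim: t v => [|t IH] v hv hq.
  rewrite /DID_S /= /rangeop sub_orth adjPT -trmx_mul -hv mulmxA PQ mul0mx trmx0.
  by [].
have hq' : qf (Q - Yt t) v = 0.
  have h1 := psd_qf v (psd_QY t).
  have h2 := psd_qf v (psd_Ydiff t).
  have : qf (Q - Yt t.+1) v - qf (Q - Yt t) v = qf (Yt t - Yt t.+1) v.
    by rewrite -qfB; congr qf; rewrite opprB addrC addrA subrK.
  rewrite hq sub0r => e; apply/eqP; rewrite eq_le h1 andbT.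
  by rewrite -oppr_ge0 e.
have := hq; rewrite QY_step qfD qf_Tst => /eqP.
rewrite paddr_eq0; first last.
- by apply: sumr_ge0 => k _; apply: psd_qf; apply: psd_QY.
- exact: psd_qf psd_D.
case/andP => /eqP hD /eqP hS.
have hPM k : P *m (M k *m v) = 0.
  move: hD; rewrite qf_D // => /eqP; rewrite psumr_eq0 => [/allP H|j _]; last exact: nrm_ge0.
  by apply: nrm_eq0; apply/eqP; have := H k (mem_index_enum _); move/implyP; apply.
have hQM k : Q *m (M k *m v) = M k *m v by rewrite /Qp mulmxBl mul1mx hPM subr0.
have hS' k : qf (Q - Yt t) (M k *m v) = 0.
  move: hS => /eqP; rewrite psumr_eq0 => [/allP H|j _]; last by apply: psd_qf; apply: psd_QY.
  by apply/eqP; have := H k (mem_index_enum _); move/implyP; apply.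
rewrite (orth_DID_S _ t); apply: sub_Rnext; first exact: IH.
by move=> k; apply: IH.
Qed.

Lemma frob_bound p q (U : 'M[C]_(p, q)) (a : C) : 0 <= a -> frob U <= a ^+ 2 ->
  forall l i, `|U l i| <= a.
Proof.
move=> a0 h l i; have := le_trans (frob_entry U l i) h.
by rewrite ler_pXn2r // ?nnegrE.
Qed.
Lemma adjmul_bound (U V : 'M[C]_n) (a b : C) i j : 0 <= a ->
  (forall l, `|U l i| <= a) -> (forall l, `|V l j| <= b) -> `|(adj U *m V) i j| <= a * b *+ n.
Proof.
move=> a0 hU hV; rewrite mxE; apply: le_trans (ler_norm_sum _ _ _) _.
rewrite -[n in X in _ <= X]card_ord -sumr_const.
apply: ler_sum => l _; rewrite adj_entry normrM norm_conjC.
by apply: ler_pM; [exact: normr_ge0|exact: normr_ge0|exact: hU|exact: hV].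
Qed.

Lemma frob_split (B : 'M[C]_n) : frob B = frob (B *m P) + frob (B *m Q).
Proof.
rewrite /frob -mxtraceD !adjM hP hQ !mulmxA -(mulmxA B P) PP -(mulmxA B Q) QQ.
by rewrite -mulmxDl -mulmxDr PQ1 mulmx1.
Qed.
Lemma frob_trace (B Y : 'M[C]_n) : adj Y = Y -> Y *m Y = Y ->
  frob (B *m Y) = \tr (Y *m (adj B *m B)).
Proof.
move=> h1 h2; rewrite /frob adjM h1 -mulmxA (mulmxA Y) h2 mxtrace_mulC.
by rewrite !mulmxA.
Qed.

Lemma entry_bound (X : 'M[C]_n) (eta : C) : psd X -> \tr X = 1 -> 0 <= eta ->
  \tr (Q *m X) <= eta ^+ 2 -> forall i j, `|(X - P *m X *m P) i j| <= eta *+ (2 * n).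
Proof.
move=> pX tX e0 hQX i j; have [B eB] := psd_factor pX.
have fB : frob B = 1 by rewrite /frob mxtrace_mulC -eB.
have hBQ : forall l i, `|(B *m Q) l i| <= eta.
  by apply: frob_bound => //; rewrite frob_trace ?hQ ?QQ // -eB.
have hB : forall l i, `|B l i| <= 1.
  by apply: frob_bound => //; rewrite fB expr1n.
have hBP : forall l i, `|(B *m P) l i| <= 1.
  apply: frob_bound => //; rewrite expr1n -fB [in X in _ <= X]frob_split lerDl; exact: frob_ge0.
have eX : X - P *m X *m P = adj (B *m Q) *m B + adj (B *m P) *m (B *m Q).
  have e1 : X - P *m X *m P = Q *m X + P *m X *m Q.
    by rewrite (mulmxBl 1%:M P X) mul1mx (mulmxBr (P *m X) 1%:M P) mulmx1 addrA subrK.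
  by rewrite e1 !adjM hQ hP eB !mulmxA.
rewrite eX mxE; apply: le_trans (ler_normD _ _) _.
have -> : eta *+ (2 * n) = eta * 1 *+ n + 1 * eta *+ n by rewrite mulr1 mul1r -mulrnDr addnn mul2n.
apply: lerD; apply: adjmul_bound => //.
Qed.

Lemma trB (A B : 'M[C]_n) : \tr (A - B) = \tr A - \tr B.
Proof. by rewrite mxtraceD; congr (_ + _); exact: raddfN. Qed.
Lemma qf_v0 (Y : 'M[C]_n) : qf Y 0 = 0.
Proof. by rewrite /qf mulmx0 mxE. Qed.
Lemma nrm_gt0 (v : 'cV[C]_n) : v != 0 -> 0 < nrm v.
Proof. by move=> nv; rewrite lt_def nrm_ge0 andbT; apply: contra nv => /eqP/nrm_eq0 ->. Qed.


Lemma adjT p q (A : 'M[C]_(p, q)) : adj (A^T) = (adj A)^T.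
Proof. by apply/matrixP => i j; rewrite !mxE. Qed.

Lemma rank_R0 : P != 1%:M -> (\rank (orth (rangeop P)) != 0)%N.
Proof.
move=> nP; apply: contra nP; rewrite rank_orth subn_eq0 /rangeop mxrank_tr => h.
have : row_full P by rewrite /row_full eqn_leq rank_leq_col h.
rewrite row_full_unit => uP; apply/eqP.
by have := mulKmx uP P; rewrite PP mulVmx // => ->.
Qed.
Lemma rank_Ri i : P != 1%:M ->
  (forall j, (j < i)%N -> DID_cont M (DID_S M (rangeop P) j)) ->
  (\rank (orth (DID_S M (rangeop P) i)) != 0)%N.
Proof.
case: i => [|i] nP hc; first exact: rank_R0.
rewrite (orth_DID_S _ i).
by have /andP[_ ->] := hc i (ltnSn i).
Qed.
Lemma DID_S_mono S0 i : (S0 <= DID_S M S0 i)%MS.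
Proof.
elim: i => [|i IH]; first exact: submx_refl.
by rewrite /DID_S iterS /DID_step (submx_trans IH) // addsmxSl.
Qed.
Lemma fail_stable (S : 'M[C]_n) k : DID_fail M S -> (orth S *m (M k)^T <= orth S)%MS.
Proof.
rewrite /DID_fail /DID_Rnext /DID_R => /andP[_ h].
have h2 : (orth S <= kermx ((M k)^T *m adj S))%MS.
  apply: (submx_trans h); apply: (submx_trans (capmxSr _ _)); exact: bigcapmx_inf.
by rewrite sub_orth -mulmxA; apply/eqP/sub_kermxP.
Qed.

Definition good (S : 'M[C]_n) (X : 'M[C]_n) := forall p (U : 'M[C]_(n, p)), (U^T <= S)%MS -> X *m U = 0.

Lemma orth_U (S : 'M[C]_n) p (U : 'M[C]_(n, p)) : (U^T <= S)%MS -> orth S *m adj (U^T) = 0.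
Proof. by move=> h; apply/eqP; rewrite -sub_orth orthS. Qed.

Lemma good_kraus (S : 'M[C]_n) X : DID_fail M S -> good S X -> good S (kraus M X).
Proof.
move=> hf gX p U hU; rewrite /kraus mulmx_suml big1 // => k _.
rewrite -!mulmxA gX ?mulmx0 // -(orthK S).
rewrite orth_sym sub_orth adjT adjM adjK trmx_mul -adjT mulmxA.
have /submxP [D ->] := fail_stable k hf.
by rewrite -mulmxA orth_U // mulmx0.
Qed.

Lemma psd_rank1 (w : 'cV[C]_n) : psd (w *m adj w).
Proof.
split; first by rewrite adjM adjK.
move=> x; rewrite -/(qf _ _) /qf !mulmxA -(mulmxA (adj x *m w)).
have -> : adj x *m w = adj (adj w *m x) by rewrite adjM adjK.
rewrite mxE big_ord1 adj_entry mulrC; exact: mul_conjC_ge0.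
Qed.

Lemma fail_not_gas i : P != 1%:M ->
  (forall j, (j < i)%N -> DID_cont M (DID_S M (rangeop P) j)) ->
  DID_fail M (DID_S M (rangeop P) i) -> ~ GAS M P.
Proof.
set S := DID_S M (rangeop P) i => nP hc hf gas.
have := rank_Ri nP hc; rewrite -/S mxrank_eq0 => /rowV0Pn [v hv nv].
set w := v^T.
have nw : w != 0 by apply: contra nv => /eqP hw; rewrite -[v]trmxK -/w hw trmx0.
have nwp := nrm_gt0 nw.
set rho := (nrm w)^-1 *: (w *m adj w).
have drho : density rho.
  split; first by apply: psdZ; [rewrite invr_ge0 ltW | apply: psd_rank1].
  by rewrite mxtraceZ mxtrace_mulC trace_mx11 mulVf // gt_eqF.
have grho : good S rho.
  move=> p U hU; rewrite /rho -scalemxAl -mulmxA.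
  have -> : adj w *m U = 0.
    have e : v *m adj (U^T) = 0.
      by case/submxP: hv => D ->; rewrite -mulmxA orth_U // mulmx0.
    have -> : adj w *m U = map_mx Num.conj (v *m adj (U^T)).
      apply/matrixP => a b; rewrite !mxE rmorph_sum; apply: eq_bigr => j _.
      by rewrite !mxE rmorphM /= conjCK.
    by rewrite e; apply/matrixP => a b; rewrite !mxE rmorph0.
  by rewrite mulmx0 scaler0.
have gX : forall t, good S (iter t (kraus M) rho) by elim => //= t IH; apply: good_kraus.
have XP t : iter t (kraus M) rho *m P = 0.
  by apply: gX; rewrite /S; exact: DID_S_mono.
have n0 : (0 < n)%N.
  rewrite lt0n; apply: contra nP => /eqP n0.
  by apply/eqP/matrixP => -[i' hi]; exfalso; move: hi; rewrite n0.
set eps : C := (n.+1%:R)^-1.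
have eps0 : 0 < eps by rewrite invr_gt0 ltr0n.
have [N hN] := gas rho drho eps eps0.
have := hN N (leqnn N); set X := iter N (kraus M) rho.
rewrite -mulmxA XP mulmx0 subr0 => h.
have tX : \tr X = 1 by rewrite /X tr_iterK1; case: drho.
have : `|\tr X| <= eps *+ n.
  apply: le_trans (ler_norm_sum _ _ _) _.
  rewrite -[n in X in _ <= X]card_ord -sumr_const.
  by apply: ler_sum => i' _; apply: ltW; apply: h.
rewrite tX normr1 -mulr_natl ler_pdivlMr ?ltr0n // mul1r ler_nat.
by rewrite ltnn.
Qed.

Lemma rank_dec S0 i : (forall j, (j < i)%N -> DID_cont M (DID_S M S0 j)) ->
  (\rank (orth (DID_S M S0 i)) + i <= \rank (orth S0))%N.
Proof.
elim: i => [|i IH] hc; first by rewrite addn0.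
have /andP[nf _] := hc i (ltnSn i).
have h1 : (\rank (DID_Rnext M (DID_S M S0 i)) < \rank (orth (DID_S M S0 i)))%N.
  rewrite (ltn_leqif (mxrank_leqif_eq (capmxSl _ _))).
  exact: nf.
apply: leq_trans (IH _); last by move=> j hj; apply: hc; apply: ltnW.
by rewrite (orth_DID_S _ i) addnS ltn_add2r.
Qed.

Lemma not_succ_fail S0 : ~ DID_terminates_successfully M S0 ->
  exists i, (forall j, (j < i)%N -> DID_cont M (DID_S M S0 j)) /\ DID_fail M (DID_S M S0 i).
Proof.
move=> nt.
have ex : exists i, ~~ DID_cont M (DID_S M S0 i).
  have : [exists i : 'I_n.+2, ~~ DID_cont M (DID_S M S0 i)].
    apply: contraT => /existsPn hall.
    have := @rank_dec S0 n.+1.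
    have hc : forall j, (j < n.+1)%N -> DID_cont M (DID_S M S0 j).
      move=> j hj; have hj2 : (j < n.+2)%N by apply: ltnW.
      have := hall (Ordinal hj2).
      by rewrite negbK.
    move=> /(_ hc) h.
    have : (n.+1 <= n)%N.
      apply: leq_trans (leq_addl (\rank (orth (DID_S M S0 n.+1))) _) _.
      apply: leq_trans h _; exact: rank_leq_col.
    by rewrite ltnn.
  by case/existsP => i hi; exists i.
case: (ex_minnP ex) => i hi hmin; exists i; split.
  move=> j hj; apply/negPn/negP => hn; have := hmin j hn.
  by rewrite leqNgt hj.
move: hi; rewrite /DID_cont negb_and negbK => hi.
case hf: (DID_fail M (DID_S M S0 i)); first by [].
exfalso; apply: nt; exists i; split.
  move=> j hj; apply/negPn/negP => hn; have := hmin j hn.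
  by rewrite leqNgt hj.
by rewrite /DID_succ hf /=; move: hi; rewrite hf /= negbK.
Qed.
Section Succ.
Variable I : nat.
Hypothesis hs : (\rank (DID_Rnext M (DID_S M (rangeop P) I)) == 0)%N.
Let Z := Q - Yt I.+1.
Lemma Z_QQ : Q *m Z *m Q = Z.
Proof.
have e1 := Yt_QQ 0; have e2 := Yt_QQ I.+1; rewrite /Yt /= in e1.
by rewrite /Z (mulmxBr Q Q (Yt I.+1)) (mulmxBl (Q *m Q) (Q *m Yt I.+1) Q) e1 e2.
Qed.
Lemma posdef_Z v : v != 0 -> 0 < qf (Z + P) v.
Proof.
have pZ := psd_QY I.+1.
have key : forall u, Q *m u = u -> u != 0 -> 0 < qf Z u.
  move=> u hu nu; rewrite lt_def psd_qf // andbT; apply/eqP => h.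
  have := K_lemma hu h; rewrite (orth_DID_S _ I).
  move: hs; rewrite mxrank_eq0 => /eqP ->; rewrite submx0 => /eqP hT.
  by apply: (negP nu); apply/eqP; rewrite -[u]trmxK hT trmx0.
move=> nv; rewrite qfD -Z_QQ qf_QQ (qf_proj v hP PP).
have vs : v = P *m v + Q *m v by rewrite -mulmxDl PQ1 mul1mx.
have [hq|hq] := eqVneq (Q *m v) 0.
  rewrite hq qf_v0 add0r; apply: nrm_gt0.
  by apply: contra nv => /eqP hp; rewrite vs hp hq addr0.
apply: ltr_wpDr; first exact: nrm_ge0.
by apply: key => //; rewrite mulmxA QQ.
Qed.
Lemma contraction : exists2 c : C, 0 <= c /\ c < 1 &
  forall X, psd X -> \tr (Q *m iter I.+1 (kraus M) X) <= c * \tr (Q *m X).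
Proof.
have pZ := psd_QY I.+1.
have hA : adj (Z + P) = Z + P by rewrite adjD hP; case: pZ => ->.
have [delta [d0 d1] hd] := posdef_bound hA posdef_Z.
exists (1 - delta).
  by split; [rewrite subr_ge0 | rewrite ltrBlDr ltrDl].
have pZd : psd (Z - delta *: Q).
  split.
    by rewrite adjB adjZ hQ geC0_conj ?(ltW d0) //; case: pZ => ->.
  move=> w; rewrite -/(qf _ _) qfB qfZ (qf_proj w hQ QQ).
  rewrite -Z_QQ qf_QQ subr_ge0.
  have := hd (Q *m w); rewrite qfD (qf_proj _ hP PP) mulmxA PQ mul0mx.
  have -> : nrm (0 : 'cV[C]_n) = 0 by rewrite /nrm mulmx0 mxE.
  by rewrite addr0.
move=> X pX; rewrite mxtrace_mulC tr_iterK -/(Yt I.+1).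
have -> : Yt I.+1 = Q - Z by rewrite /Z opprB addrC subrK.
have := psd_tr_ge0 pX pZd.
rewrite (mulmxBr X Z (delta *: Q)) trB -scalemxAr mxtraceZ subr_ge0 => h.
rewrite (mulmxBr X Q Z) trB mxtrace_mulC mulrBl mul1r lerD2l lerN2.
by rewrite mxtrace_mulC.
Qed.

Lemma fQ_ge0 X : psd X -> 0 <= \tr (Q *m X).
Proof. by move=> pX; rewrite mxtrace_mulC; apply: psd_tr_ge0 pX psdQ. Qed.
Lemma fQ_mono Y : psd Y -> \tr (Q *m kraus M Y) <= \tr (Q *m Y).
Proof.
move=> pY; rewrite mxtrace_mulC tr_kraus (mxtrace_mulC Q Y) -subr_ge0 -trB -mulmxBr.
exact: psd_tr_ge0 pY psd_D.
Qed.
Lemma fQ_le X d t : psd X -> \tr (Q *m iter (d + t) (kraus M) X) <= \tr (Q *m iter t (kraus M) X).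
Proof.
move=> pX; elim: d => // d IH; rewrite addSn /=.
apply: le_trans IH; apply: fQ_mono; exact: psd_iterK.
Qed.
Lemma decay : exists N : nat, exists2 c : C, (0 <= c /\ c < 1) &
  forall rho, density rho -> forall k t, (k * N <= t)%N -> \tr (Q *m iter t (kraus M) rho) <= c ^+ k.
Proof.
have [c [c0 c1] hc] := contraction.
exists I.+1, c => // rho [prho trho] k t hkt.
rewrite -(subnK hkt); apply: le_trans (fQ_le (t - k * I.+1) (k * I.+1) prho) _.
elim: k {hkt} => [|k IH].
  rewrite mul0n /= expr0.
  have : \tr (P *m rho) + \tr (Q *m rho) = 1 by rewrite -mxtraceD -mulmxDl PQ1 mul1mx.
  move=> e; rewrite -e lerDr; rewrite mxtrace_mulC; exact: psd_tr_ge0 prho psdP.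
rewrite mulSn iterD exprS; apply: le_trans (hc _ (psd_iterK _ prho)) _.
by apply: ler_wpM2l.
Qed.
End Succ.
End Quantum.

Lemma bern (C : numClosedFieldType) (c : C) k : 0 <= c -> c <= 1 -> c ^+ k * (1 + k%:R * (1 - c)) <= 1.
Proof.
move=> c0 c1; elim: k => [|k IH]; first by rewrite mul0r addr0 expr0 mulr1.
have e : c ^+ k.+1 * (1 + k.+1%:R * (1 - c)) = c ^+ k * (1 + k%:R * (1 - c)) - c ^+ k * (k.+1%:R * (1 - c) ^+ 2).
  rewrite -natr1 exprS; ring.
rewrite e; apply: le_trans _ IH; rewrite gerBl.
apply: mulr_ge0; first exact: exprn_ge0 c0.
by apply: mulr_ge0; [exact: ler0n | apply: exprn_ge0; rewrite subr_ge0].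
Qed.

Lemma small_pow (C : archiClosedFieldType) (c eta : C) : 0 <= c -> c < 1 -> 0 < eta ->
  exists k : nat, c ^+ k <= eta.
Proof.
move=> c0 c1 e0; set d := 1 - c.
have d0 : 0 < d by rewrite subr_gt0.
have x0 : 0 <= (d * eta)^-1 by rewrite invr_ge0 ltW // mulr_gt0.
have := archi_boundP x0; set k := Num.Def.archi_bound _ => hk.
exists k.
have h1 : 1 < k%:R * (d * eta).
  by rewrite -[_^-1]mul1r ltr_pdivrMr ?mulr_gt0 in hk.
have h2 : 1 <= eta * (1 + k%:R * d).
  rewrite mulrDr mulr1; apply: le_trans (ltW h1) _.
  have -> : eta * (k%:R * d) = k%:R * (d * eta) by ring.
  by rewrite lerDr ltW.
have hb := @bern _ c k c0 (ltW c1).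
have pk : 0 <= c ^+ k by exact: exprn_ge0.
apply: le_trans (_ : c ^+ k * (eta * (1 + k%:R * d)) <= _).
  by rewrite -{1}[c ^+ k]mulr1 ler_wpM2l.
by rewrite mulrCA -{2}[eta]mulr1 ler_wpM2l // ltW.
Qed.

Unset Implicit Arguments.
Theorem proposition4 (C : archiClosedFieldType) (n m : nat)
  (M : 'I_m -> 'M[C]_n) (P : 'M[C]_n) :
  trace_preserving M ->
  orth_proj P ->
  P != 1%:M ->
  invariant_subspace M P ->
  GAS M P <-> DID_terminates_successfully M (rangeop P).
Proof.
move=> tp op nP inv; split.
  move=> gas; case: (classic (DID_terminates_successfully M (rangeop P))) => // nt.
  have [i [hc hf]] := not_succ_fail nt.
  by case: (fail_not_gas tp op nP hc hf gas).
move=> [I [_ /andP [_ hr]]].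
have [N [c [c0 c1] hd]] := decay tp op inv hr.
move=> rho drho eps eps0.
set eta := eps / (2 * n).+1%:R.
have eta0 : 0 < eta by rewrite divr_gt0 // ltr0n.
have [k hk] := small_pow c0 c1 (mulr_gt0 eta0 eta0).
exists (k * N)%N => t ht i j.
set X := iter t (kraus M) rho.
have pX : psd X by apply: psd_iterK; case: drho.
have tX : \tr X = 1 by rewrite /X tr_iterK1 //; case: drho.
have fX : \tr (Qp P *m X) <= eta ^+ 2 by rewrite expr2; apply: le_trans (hd _ drho _ _ ht) hk.
apply: le_lt_trans (entry_bound op pX tX (ltW eta0) fX i j) _.
by rewrite -mulr_natr /eta mulrAC ltr_pdivrMr ?ltr0n // ltr_pM2l // ltr_nat.
Qed.
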